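(* Consider the closed-loop system $$\dot x = Ax + Bu + Qw,\qquad \dot u = -\epsilon\, \widetilde H^T \nabla \Phi(x,u),$$ with $x\in\mathbb{R}^n$, $u\in\mathbb{R}^p$, a constant disturbance $w\in\mathbb{R}^q$ and a gain $\epsilon>0$. Suppose that: (i) there is a symmetric positive definite $P$ with $A^TP+PA\preceq -I_n$; (ii) $\tilde\Phi^w(u):=\Phi(Hu+Rw,u)$ is differentiable in $u$ for all $u$ and $w$; (iii) there exists $\ell>0$ with $\|\widetilde H^T(\nabla\Phi(x,u)-\nabla\Phi(x',u))\|\le \ell\|x-x'\|$ for all $x,x'\in\mathbb{R}^n$, $u\in\mathbb{R}^p$; (iv) the sublevel sets of $\tilde\Phi^w$ are compact; (v) $\Phi$ is convex. If $\epsilon<\frac{1}{2\ell\|PH\|}$, then every trajectory of the closed-loop system converges to the set of global solutions of $$\min_{x,u}\ \Phi(x,u)\quad\text{subject to}\quad x=Hu+Rw.$$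
   Context: $A\in\mathbb{R}^{n\times n}$, $B\in\mathbb{R}^{n\times p}$, $Q\in\mathbb{R}^{n\times q}$ are real matrices; under (i) $A$ is invertible, and $H:=-A^{-1}B$, $R:=-A^{-1}Q$, $\widetilde H^T:=[\,H^T\ \ I_p\,]$. $\Phi:\mathbb{R}^n\times\mathbb{R}^p\to\mathbb{R}$ is a differentiable cost function with gradient $\nabla\Phi(x,u)\in\mathbb{R}^{n+p}$. Norms are Euclidean / induced 2-norms. The disturbance $w$ is fixed. *)

(* Defs.v *)
From HB Require Import structures.
From mathcomp Require Import all_boot all_order all_algebra.
From mathcomp Require Import all_classical all_reals all_analysis.
Set Implicit Arguments. Unset Strict Implicit. Unset Printing Implicit Defensive.
Import Order.TTheory GRing.Theory Num.Theory.
Import numFieldNormedType.Exports.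
Local Open Scope ring_scope.
Local Open Scope classical_set_scope.

Definition enorm {R : realType} {k : nat} (v : 'cV[R]_k) : R :=
  Num.sqrt (\sum_(i < k) v i 0 ^+ 2).

Definition opnorm {R : realType} {m k : nat} (M : 'M[R]_(m, k)) : R :=
  sup [set enorm (M *m v) | v in [set v : 'cV[R]_k | enorm v <= 1]].

Definition qform {R : realType} {k : nat} (M : 'M[R]_k) (v : 'cV[R]_k) : R :=
  (v^T *m M *m v) 0 0.

Definition grad {R : realType} {k : nat} (f : 'cV[R]_k -> R) (z : 'cV[R]_k)
  : 'cV[R]_k := \col_i ('D_(delta_mx i 0) f z).

Definition Hmat {R : realType} {n p : nat} (A : 'M[R]_n) (B : 'M[R]_(n, p))
  : 'M[R]_(n, p) := - (invmx A *m B).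
Definition Rmat {R : realType} {n q : nat} (A : 'M[R]_n) (Q : 'M[R]_(n, q))
  : 'M[R]_(n, q) := - (invmx A *m Q).
Definition HtT {R : realType} {n p : nat} (A : 'M[R]_n) (B : 'M[R]_(n, p))
  : 'M[R]_(p, n + p) := row_mx (Hmat A B)^T 1%:M.

Definition Phitil {R : realType} {n p q : nat} (A : 'M[R]_n) (B : 'M[R]_(n, p))
  (Q : 'M[R]_(n, q)) (Phi : 'cV[R]_(n + p) -> R) (w : 'cV[R]_q) (u : 'cV[R]_p) : R :=
  Phi (col_mx (Hmat A B *m u + Rmat A Q *m w) u).

Definition solution_set {R : realType} {n p q : nat} (A : 'M[R]_n)
  (B : 'M[R]_(n, p)) (Q : 'M[R]_(n, q)) (Phi : 'cV[R]_(n + p) -> R)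
  (w : 'cV[R]_q) : set ('cV[R]_n * 'cV[R]_p) :=
  [set xu | xu.1 = Hmat A B *m xu.2 + Rmat A Q *m w /\
     forall x' u', x' = Hmat A B *m u' + Rmat A Q *m w ->
       Phi (col_mx xu.1 xu.2) <= Phi (col_mx x' u')].

Definition convex_fun {R : realType} {k : nat} (f : 'cV[R]_k -> R) : Prop :=
  forall z1 z2 (t : R), 0 <= t <= 1 ->
    f (t *: z1 + (1 - t) *: z2) <= t * f z1 + (1 - t) * f z2.

(* Main.v *)
Require Import Defs.
From HB Require Import structures.
From mathcomp Require Import all_boot all_order all_algebra.
From mathcomp Require Import all_classical all_reals all_analysis.
From mathcomp Require Import ring lra.
Import Order.TTheory GRing.Theory Num.Theory.
Import numFieldNormedType.Exports.
Local Open Scope ring_scope.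
Local Open Scope classical_set_scope.
Set Implicit Arguments. Unset Strict Implicit. Unset Printing Implicit Defensive.
Section Vec.
Variable R : realType.

Definition dot {k : nat} (a b : 'cV[R]_k) : R := \sum_(i < k) a i 0 * b i 0.

Lemma dotC k (a b : 'cV[R]_k) : dot a b = dot b a.
Proof. by apply: eq_bigr => i _; rewrite mulrC. Qed.

Lemma dotDl k (a b c : 'cV[R]_k) : dot (a + b) c = dot a c + dot b c.
Proof. by rewrite /dot -big_split; apply: eq_bigr => i _; rewrite mxE mulrDl. Qed.

Lemma dotDr k (a b c : 'cV[R]_k) : dot c (a + b) = dot c a + dot c b.
Proof. by rewrite dotC dotDl !(dotC c). Qed.

Lemma dotZl k (t : R) (a b : 'cV[R]_k) : dot (t *: a) b = t * dot a b.
Proof. by rewrite /dot mulr_sumr; apply: eq_bigr => i _; rewrite mxE mulrA. Qed.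

Lemma dotZr k (t : R) (a b : 'cV[R]_k) : dot a (t *: b) = t * dot a b.
Proof. by rewrite dotC dotZl dotC. Qed.

Lemma dotNl k (a b : 'cV[R]_k) : dot (- a) b = - dot a b.
Proof. by rewrite -scaleN1r dotZl mulN1r. Qed.

Lemma dotNr k (a b : 'cV[R]_k) : dot a (- b) = - dot a b.
Proof. by rewrite dotC dotNl dotC. Qed.

Lemma dotBl k (a b c : 'cV[R]_k) : dot (a - b) c = dot a c - dot b c.
Proof. by rewrite dotDl dotNl. Qed.

Lemma dotBr k (a b c : 'cV[R]_k) : dot c (a - b) = dot c a - dot c b.
Proof. by rewrite dotDr dotNr. Qed.

Lemma dot0l k (b : 'cV[R]_k) : dot 0 b = 0.
Proof. by rewrite /dot big1 // => i _; rewrite mxE mul0r. Qed.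

Lemma dot0r k (b : 'cV[R]_k) : dot b 0 = 0.
Proof. by rewrite dotC dot0l. Qed.

Lemma dot_ge0 k (a : 'cV[R]_k) : 0 <= dot a a.
Proof. by apply: sumr_ge0 => i _; rewrite -expr2 sqr_ge0. Qed.

Lemma dot_mulmx k l (M : 'M[R]_(k, l)) a b : dot a (M *m b) = dot (M^T *m a) b.
Proof.
rewrite /dot.
under eq_bigr do rewrite mxE big_distrr /=.
rewrite exchange_big /=; apply: eq_bigr => j _.
rewrite mxE big_distrl /=; apply: eq_bigr => i _.
by rewrite mxE mulrCA mulrA.
Qed.

Lemma dot_trmx k (a b : 'cV[R]_k) : dot a b = (a^T *m b) 0 0.
Proof. by rewrite mxE; apply: eq_bigr => i _; rewrite mxE. Qed.

Lemma qformE k (M : 'M[R]_k) v : qform M v = dot v (M *m v).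
Proof. by rewrite /qform -mulmxA -dot_trmx. Qed.

Lemma quad_disc (al be ga : R) :
  (forall t, 0 <= al + 2 * be * t + ga * t ^+ 2) -> be ^+ 2 <= al * ga.
Proof.
move=> H.
have al0 : 0 <= al by have := H 0; rewrite !mulr0 expr0n /= mulr0 !addr0.
have [ga0|ga0] := ltP 0 ga.
  have := H (- be / ga).
  set t := - be / ga.
  have -> : al + 2 * be * t + ga * t ^+ 2 = al - be ^+ 2 / ga.
    by rewrite /t; field; rewrite gt_eqF.
  by rewrite subr_ge0 ler_pdivrMr // mulrC.
have ga00 : ga = 0.
  apply/eqP; rewrite eq_le ga0 /=; rewrite leNgt; apply/negP => gan.
  set t := (al + 1) / (- ga) + 1.
  have t1 : 1 <= t by rewrite /t lerDr divr_ge0 // ?oppr_ge0 ?ltW //; lra.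
  have gt : ga * t = - (al + 1) + ga by rewrite /t mulrDr mulr1; field; rewrite lt_eqF.
  have h1 := H t; have h2 := H (- t).
  have h3 : ga * t ^+ 2 <= ga * t.
    rewrite expr2; nra.
  have : 0 <= al + ga * t ^+ 2 by move: h1 h2; rewrite sqrrN; lra.
  lra.
subst ga.
have [be0|be0] := eqVneq be 0; first by rewrite be0 expr0n /= mulr0.
have := H (- (al + 1) / (2 * be)).
have -> : al + 2 * be * (- (al + 1) / (2 * be)) + 0 * (- (al + 1) / (2 * be)) ^+ 2 = -1.
  by field; rewrite be0.
lra.
Qed.

Lemma dot_CS k (a b : 'cV[R]_k) : dot a b ^+ 2 <= dot a a * dot b b.
Proof.
apply: quad_disc => t.
have := dot_ge0 (a + t *: b).
by rewrite !(dotDl, dotDr, dotZl, dotZr) (dotC b a); lra.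
Qed.

Lemma bf_CS k (M : 'M[R]_k) (a b : 'cV[R]_k) : M^T = M ->
  (forall v, 0 <= dot v (M *m v)) ->
  dot a (M *m b) ^+ 2 <= dot a (M *m a) * dot b (M *m b).
Proof.
move=> MT Mpos; apply: quad_disc => t.
have := Mpos (a + t *: b).
have symm : dot b (M *m a) = dot a (M *m b).
  by rewrite dot_mulmx MT dotC.
by rewrite !(mulmxDr, dotDl, dotDr, dotZl) -!scalemxAr !dotZr symm; lra.
Qed.

Lemma enorm_ge0 k (a : 'cV[R]_k) : 0 <= enorm a.
Proof. exact: sqrtr_ge0. Qed.

Lemma enorm_dot k (a : 'cV[R]_k) : enorm a = Num.sqrt (dot a a).
Proof. by rewrite /enorm /dot; congr Num.sqrt; apply: eq_bigr => i _; rewrite expr2. Qed.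

Lemma enorm_sq k (a : 'cV[R]_k) : enorm a ^+ 2 = dot a a.
Proof. by rewrite enorm_dot sqr_sqrtr // dot_ge0. Qed.

Lemma dot_le k (a b : 'cV[R]_k) : `|dot a b| <= enorm a * enorm b.
Proof.
rewrite -ler_sqr ?nnegrE ?mulr_ge0 ?enorm_ge0 //.
by rewrite real_normK ?num_real // exprMn !enorm_sq dot_CS.
Qed.

Lemma dot_le' k (a b : 'cV[R]_k) : dot a b <= enorm a * enorm b.
Proof. exact: le_trans (ler_norm _) (dot_le _ _). Qed.

Lemma enormZ k (t : R) (a : 'cV[R]_k) : enorm (t *: a) = `|t| * enorm a.
Proof.
rewrite !enorm_dot dotZl dotZr mulrA -expr2 sqrtrM ?sqr_ge0 //.
by rewrite sqrtr_sqr.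
Qed.

Lemma enormN k (a : 'cV[R]_k) : enorm (- a) = enorm a.
Proof. by rewrite -scaleN1r enormZ normrN1 mul1r. Qed.

Lemma enormD k (a b : 'cV[R]_k) : enorm (a + b) <= enorm a + enorm b.
Proof.
rewrite -ler_sqr ?nnegrE ?addr_ge0 ?enorm_ge0 //.
rewrite enorm_sq sqrrD !enorm_sq !(dotDl, dotDr) (dotC b a).
have := dot_le' a b; lra.
Qed.

Lemma enorm0 k : enorm (0 : 'cV[R]_k) = 0.
Proof. by rewrite enorm_dot dot0l sqrtr0. Qed.

Lemma enorm_eq0 k (a : 'cV[R]_k) : enorm a = 0 -> a = 0.
Proof.
move=> /eqP; rewrite enorm_dot sqrtr_eq0 => H.
have H0 : dot a a = 0 by apply/eqP; rewrite eq_le H dot_ge0.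
apply/matrixP => i j; rewrite ord1 mxE.
move: H0; rewrite /dot => /eqP; rewrite psumr_eq0; last by move=> l _; rewrite -expr2 sqr_ge0.
by move=> /allP /(_ i (mem_index_enum _)) /implyP /(_ isT); rewrite mulf_eq0 orbb => /eqP.
Qed.

Definition fro {k l : nat} (M : 'M[R]_(k, l)) : R :=
  Num.sqrt (\sum_(i < k) \sum_(j < l) M i j ^+ 2).

Lemma fro_ge0 k l (M : 'M[R]_(k, l)) : 0 <= fro M.
Proof. exact: sqrtr_ge0. Qed.

Lemma enorm_mulmx k l (M : 'M[R]_(k, l)) v : enorm (M *m v) <= fro M * enorm v.
Proof.
rewrite (enorm_dot v) /fro -sqrtrM; last first.
  by apply: sumr_ge0 => i _; apply: sumr_ge0 => j _; apply: sqr_ge0.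
rewrite /enorm ler_sqrt; last first.
  apply: mulr_ge0; [by apply: sumr_ge0 => i _; apply: sumr_ge0 => j _; apply: sqr_ge0|apply: dot_ge0].
rewrite mulr_suml; apply: ler_sum => i _.
have -> : (M *m v) i 0 = dot (\col_j M i j) v.
  by rewrite mxE; apply: eq_bigr => j _; rewrite mxE.
apply: le_trans (dot_CS _ _) _; apply: ler_wpM2r; first exact: dot_ge0.
by rewrite le_eqVlt; apply/orP; left; apply/eqP; apply: eq_bigr => j _; rewrite mxE expr2.
Qed.

Lemma enorm_mulmx_op k l (M : 'M[R]_(k, l)) v : enorm (M *m v) <= opnorm M * enorm v.
Proof.
have hs : has_sup [set enorm (M *m v) | v in [set v : 'cV[R]_l | enorm v <= 1]].
  split; first by exists (enorm (M *m 0)), 0 => //=; rewrite enorm0 ler01.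
  exists (fro M) => _ [u /= u1 <-].
  apply: le_trans (enorm_mulmx _ _) _.
  by rewrite -[leRHS]mulr1 ler_wpM2l ?fro_ge0.
have [->|v0] := eqVneq v 0; first by rewrite mulmx0 !enorm0 mulr0.
have ev : 0 < enorm v.
  by rewrite lt_def enorm_ge0 andbT; apply/eqP => /enorm_eq0 /eqP; rewrite (negbTE v0).
have := sup_upper_bound hs.
move=> /(_ (enorm (M *m ((enorm v)^-1 *: v)))) H.
have : enorm (M *m ((enorm v)^-1 *: v)) <= opnorm M.
  apply: H; exists ((enorm v)^-1 *: v) => //=.
  by rewrite enormZ ger0_norm ?invr_ge0 ?enorm_ge0 // mulVf ?gt_eqF.
rewrite -scalemxAr enormZ ger0_norm ?invr_ge0 ?enorm_ge0 //.
by rewrite ler_pdivrMl // mulrC.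
Qed.

Lemma opnorm_ge0 k l (M : 'M[R]_(k, l)) : 0 <= opnorm M.
Proof.
have hs : has_sup [set enorm (M *m v) | v in [set v : 'cV[R]_l | enorm v <= 1]].
  split; first by exists (enorm (M *m 0)), 0 => //=; rewrite enorm0 ler01.
  exists (fro M) => _ [u /= u1 <-].
  apply: le_trans (enorm_mulmx _ _) _.
  by rewrite -[leRHS]mulr1 ler_wpM2l ?fro_ge0.
apply: le_trans (sup_upper_bound hs _); first exact: (enorm_ge0 (M *m 0)).
by exists 0 => //=; rewrite enorm0 ler01.
Qed.

Lemma enorm_col_mx k l (a : 'cV[R]_k) (b : 'cV[R]_l) :
  enorm (col_mx a b) <= enorm a + enorm b.
Proof.
rewrite -ler_sqr ?nnegrE ?addr_ge0 ?enorm_ge0 //.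
have -> : enorm (col_mx a b) ^+ 2 = enorm a ^+ 2 + enorm b ^+ 2.
  rewrite !enorm_sq /dot big_split_ord /=; congr (_ + _); apply: eq_bigr => i _.
    by rewrite col_mxEu.
  by rewrite col_mxEd.
rewrite sqrrD; have := enorm_ge0 a; have := enorm_ge0 b; nra.
Qed.

Lemma enorm_le_norm k (a : 'cV[R]_k) : enorm a <= k%:R * `|a|.
Proof.
have ha : forall i, `|a i 0| <= `|a|.
  move=> i; rewrite [leRHS]/Num.Def.normr /= mx_normrE.
  by apply: le_trans; last exact: (le_bigmax _ _ (i, 0)).
rewrite -ler_sqr ?nnegrE ?mulr_ge0 ?enorm_ge0 ?normr_ge0 ?ler0n //.
rewrite enorm_sq /dot.
apply: (@le_trans _ _ (\sum_(i < k) `|a|^+2)).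
  apply: ler_sum => i _; rewrite -expr2 -real_normK ?num_real //.
  by rewrite ler_sqr ?nnegrE ?normr_ge0.
rewrite sumr_const card_ord -[leLHS]mulr_natl exprMn.
have hk : (k%:R : R) = 0 \/ 1 <= (k%:R : R).
  by case: (k) => [|k']; [left | right; rewrite ler1n].
have := normr_ge0 a; case: hk => [->|hk]; nra.
Qed.

End Vec.
Section Der.
Variable R : realType.

Lemma mx_cont_entries {T : topologicalType} m n (F : T -> 'M[R]_(m, n)) :
  (forall i j, continuous (fun t => F t i j)) -> continuous F.
Proof.
move=> Fc t; apply/cvgrPdist_lt => e e0.
have : \forall s \near t, forall ij : 'I_m * 'I_n,
    `|F t ij.1 ij.2 - F s ij.1 ij.2| < e.
  apply: filter_forall => ij.
  by have := Fc ij.1 ij.2 t => /cvgrPdist_lt /(_ e e0).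
apply: filterS => s Hs.
rewrite [X in X < _]/Num.Def.normr /= mx_normrE.
apply/bigmax_ltP; split => // ij _.
by rewrite !mxE; apply: Hs.
Qed.

Lemma entry_cont {T : topologicalType} m n (F : T -> 'M[R]_(m, n)) i j :
  continuous F -> continuous (fun t => F t i j).
Proof.
move=> cF t.
exact: (@continuous_comp _ _ _ F (fun M : 'M[R]_(m, n) => M i j) t (cF t)
  (@coord_continuous R m n i j (F t))).
Qed.

Lemma cont_mulmx k l r (M : 'M[R]_(k, l)) :
  continuous (fun u : 'M[R]_(l, r) => M *m u).
Proof.
apply: mx_cont_entries => i j.
have -> : (fun u : 'M[R]_(l, r) => (M *m u) i j) =
    \sum_(x < l) (fun u : 'M[R]_(l, r) => M i x * u x j).
  by apply/funext => u; rewrite mxE fct_sumE.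
move=> u; elim/big_ind: _ => [|f g cf cg|x _].
- exact: cst_continuous.
- exact: continuousD.
- apply: (@continuousM R _ (fun=> M i x) (fun u : 'M[R]_(l, r) => u x j) u).
    exact: cst_continuous.
  exact: (@coord_continuous R l r x j).
Qed.

Lemma cont_col {T : topologicalType} k l r (F : T -> 'M[R]_(k, r))
  (G : T -> 'M[R]_(l, r)) :
  continuous F -> continuous G -> continuous (fun t => col_mx (F t) (G t)).
Proof.
move=> cF cG; apply: mx_cont_entries => i j.
case: (split_ordP i) => i' ->.
  have -> : (fun t => col_mx (F t) (G t) (lshift l i') j) = (fun t => F t i' j).
    by apply/funext => t; rewrite col_mxEu.
  exact: entry_cont.
have -> : (fun t => col_mx (F t) (G t) (rshift k i') j) = (fun t => G t i' j).
  by apply/funext => t; rewrite col_mxEd.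
exact: entry_cont.
Qed.

Lemma der_entry m n (M : R -> 'M[R]_(m, n)) t i j : derivable M t 1 ->
  derivable (fun s => M s i j) t 1 /\ 'D_1 (fun s => M s i j) t = 'D_1 M t i j.
Proof.
move=> dM; split; first exact: ((derivable_mxP M t 1).1 dM i j).
by rewrite (derive_mx dM) mxE.
Qed.

Lemma der_mul m k l (M1 : R -> 'M[R]_(m, k)) (M2 : R -> 'M[R]_(k, l)) t :
  derivable M1 t 1 -> derivable M2 t 1 ->
  derivable (fun s => M1 s *m M2 s) t 1 /\
  'D_1 (fun s => M1 s *m M2 s) t = 'D_1 M1 t *m M2 t + M1 t *m 'D_1 M2 t.
Proof.
move=> d1 d2.
have hf i j : (fun s => (M1 s *m M2 s) i j) =
    \sum_(x < k) ((fun s => M1 s i x) * (fun s => M2 s x j)).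
  by apply/funext => s; rewrite mxE fct_sumE.
have hd i j : derivable (fun s => (M1 s *m M2 s) i j) t 1.
  rewrite hf; apply: derivable_sum => x; apply: derivableM.
    exact: (der_entry _ _ d1).1.
  exact: (der_entry _ _ d2).1.
have dP : derivable (fun s => M1 s *m M2 s) t 1 by apply/derivable_mxP.
split => //.
rewrite (derive_mx dP); apply/matrixP => i j; rewrite !mxE hf derive_sum; last first.
  move=> x; apply: derivableM.
    exact: (der_entry _ _ d1).1.
  exact: (der_entry _ _ d2).1.
rewrite -big_split /=; apply: eq_bigr => x _.
rewrite deriveM; last 2 first.
    exact: (der_entry _ _ d1).1.
  exact: (der_entry _ _ d2).1.
rewrite (der_entry _ _ d1).2 (der_entry _ _ d2).2 /=.
by rewrite addrC; congr (_ + _); exact: mulrC.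
Qed.

Lemma der_cmul m k l (C : 'M[R]_(m, k)) (M2 : R -> 'M[R]_(k, l)) t :
  derivable M2 t 1 ->
  derivable (fun s => C *m M2 s) t 1 /\
  'D_1 (fun s => C *m M2 s) t = C *m 'D_1 M2 t.
Proof.
move=> d2.
have d1 : derivable (fun _ : R => C) t 1 by exact: derivable_cst.
have [h1 h2] := der_mul d1 d2.
split => //; rewrite h2.
have -> : 'D_1 (fun _ : R => C) t = 0 by exact: (derive_cst C t 1).
by rewrite mul0mx add0r.
Qed.

Lemma der_tr m n (M : R -> 'M[R]_(m, n)) t : derivable M t 1 ->
  derivable (fun s => (M s)^T) t 1 /\ 'D_1 (fun s => (M s)^T) t = ('D_1 M t)^T.
Proof.
move=> dM.
have hd : derivable (fun s => (M s)^T) t 1.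
  apply/derivable_mxP => i j.
  have -> : (fun s => (M s)^T i j) = (fun s => M s j i) by apply/funext => s; rewrite mxE.
  exact: (der_entry _ _ dM).1.
split => //; rewrite (derive_mx hd); apply/matrixP => i j; rewrite !mxE.
have -> : (fun s => (M s)^T i j) = (fun s => M s j i) by apply/funext => s; rewrite mxE.
exact: (der_entry _ _ dM).2.
Qed.

Lemma der_col k l r (F : R -> 'M[R]_(k, r)) (G : R -> 'M[R]_(l, r)) t :
  derivable F t 1 -> derivable G t 1 ->
  derivable (fun s => col_mx (F s) (G s)) t 1 /\
  'D_1 (fun s => col_mx (F s) (G s)) t = col_mx ('D_1 F t) ('D_1 G t).
Proof.
move=> dF dG.
have hd : derivable (fun s => col_mx (F s) (G s)) t 1.
  apply/derivable_mxP => i j; case: (split_ordP i) => i' ->.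
    have -> : (fun s => col_mx (F s) (G s) (lshift l i') j) = (fun s => F s i' j).
      by apply/funext => s; rewrite col_mxEu.
    exact: (der_entry _ _ dF).1.
  have -> : (fun s => col_mx (F s) (G s) (rshift k i') j) = (fun s => G s i' j).
    by apply/funext => s; rewrite col_mxEd.
  exact: (der_entry _ _ dG).1.
split => //; rewrite (derive_mx hd); apply/matrixP => i j; rewrite mxE.
case: (split_ordP i) => i' ->.
  have -> : (fun s => col_mx (F s) (G s) (lshift l i') j) = (fun s => F s i' j).
    by apply/funext => s; rewrite col_mxEu.
  by rewrite col_mxEu (der_entry _ _ dF).2.
have -> : (fun s => col_mx (F s) (G s) (rshift k i') j) = (fun s => G s i' j).
  by apply/funext => s; rewrite col_mxEd.
by rewrite col_mxEd (der_entry _ _ dG).2.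
Qed.

Lemma der_chain k (Phi : 'cV[R]_k -> R) (g : R -> 'cV[R]_k) t :
  derivable g t 1 -> differentiable Phi (g t) ->
  derivable (fun s => Phi (g s)) t 1 /\
  'D_1 (fun s => Phi (g s)) t = 'd Phi (g t) ('D_1 g t).
Proof.
move=> dg dPhi.
have dg' : differentiable g t by apply/derivable1_diffP.
have dc : differentiable (Phi \o g) t by apply: differentiable_comp.
split; first by apply/derivable1_diffP.
have -> : (fun s => Phi (g s)) = Phi \o g by [].
rewrite (deriveE _ dc) (diff_comp dg' dPhi) /= (deriveE _ dg') //.
Qed.

Lemma diff_grad k (Phi : 'cV[R]_k -> R) y v : differentiable Phi y ->
  'd Phi y v = dot (grad Phi y) v.
Proof.
move=> dP.
rewrite {1}(matrix_sum_delta v) linear_sum /dot; apply: eq_bigr => i _.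
rewrite big_ord1 linearZ /= mxE (deriveE _ dP).
by rewrite mulrC.
Qed.

Lemma nonincr (f : R -> R) a b : a <= b ->
  (forall t, a <= t <= b -> derivable f t 1) ->
  (forall t, a < t < b -> f^`() t <= 0) -> f b <= f a.
Proof.
move=> ab df dn.
have h := @ler0_derive1_le_cc R f a b.
apply: h => //.
- by move=> x; rewrite in_itv /= => /andP[h1 h2]; apply: df; rewrite !ltW.
- apply: derivable_within_continuous => x xab; apply: df.
  by move: xab; rewrite in_itv.
- by rewrite in_itv /= lexx ab.
- by rewrite in_itv /= lexx ab.
Qed.

End Der.
Section Gen.
Variable R : realType.

Lemma cvx_grad k (Phi : 'cV[R]_k -> R) y y' : differentiable Phi y ->
  convex_fun Phi -> Phi y + dot (grad Phi y) (y' - y) <= Phi y'.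
Proof.
move=> dP cvx.
set d := y' - y.
set G := fun h : R => h^-1 *: ((Phi \o shift y) (h *: d) - Phi y).
have der : derivable Phi y d by exact: diff_derivable.
have cv0 : G @ 0^' --> 'D_d Phi y by exact: der.
have cvr : G @ 0^'+ --> 'D_d Phi y.
  move=> A /cv0 /nbhs_ballP [_ /posnumP[e] hA].
  by exists e%:num => //= s xs /gt_eqF/negbT/hA; exact.
have le : 'D_d Phi y <= Phi y' - Phi y.
  apply: (cvgr_to_le cvr).
  near=> s.
  have s0 : 0 < s by near: s; exact: nbhs_right_gt.
  have s1 : s < 1 by near: s; exact: nbhs_right_lt.
  have := cvx y' y s.
  rewrite (ltW s0) (ltW s1) /= => /(_ isT).
  have -> : s *: y' + (1 - s) *: y = s *: d + y.
    by apply/matrixP => i j; rewrite !mxE; ring.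
  move=> hc.
  rewrite /G /= -[_ *: _]/(s^-1 * _) mulrC ler_pdivrMr //.
  lra.
rewrite (deriveE _ dP) diff_grad // in le.
lra.
Unshelve. all: by end_near.
Qed.

Lemma qform1 k (v : 'cV[R]_k) : qform 1%:M v = dot v v.
Proof. by rewrite qformE mul1mx. Qed.

Lemma qform_lyap k (A P : 'M[R]_k) v : P^T = P ->
  qform (A^T *m P + P *m A) v = 2 * dot v (P *m (A *m v)).
Proof.
move=> PT; rewrite qformE mulmxDl dotDr -!mulmxA dot_mulmx trmxK.
rewrite [dot (A *m v) (P *m v)]dot_mulmx PT [dot (P *m (A *m v)) v]dotC.
by rewrite -mulr2n mulr_natl.
Qed.

Lemma A_unit k (A P : 'M[R]_k) : P^T = P ->
  (forall v, qform (A^T *m P + P *m A) v <= - qform 1%:M v) -> A \in unitmx.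
Proof.
move=> PT Ly.
rewrite unitmxE unitfE -det_tr; apply/negP => /det0P [v v0 vA].
have Av : A *m v^T = 0 by rewrite -[A]trmxK -trmx_mul vA trmx0.
have := Ly v^T; rewrite qform_lyap // qform1 Av mulmx0 dot0r mulr0.
move=> h.
have h0 : dot v^T v^T = 0 by apply/eqP; rewrite eq_le dot_ge0 andbT; lra.
have : enorm v^T = 0 by rewrite enorm_dot h0 sqrtr0.
move=> /enorm_eq0 /eqP; rewrite trmx_eq0 => /eqP e; move: v0; rewrite e eqxx //.
Qed.

Lemma qform_ge0 k (P : 'M[R]_k) :
  (forall v, v != 0 -> 0 < qform P v) -> forall v, 0 <= qform P v.
Proof.
move=> Pp v; have [->|v0] := eqVneq v 0.
  by rewrite qformE dot0l.
exact: ltW (Pp v v0).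
Qed.

Lemma qform_le k (P : 'M[R]_k) v : qform P v <= fro P * dot v v.
Proof.
rewrite qformE; apply: le_trans (dot_le' _ _) _.
rewrite -enorm_sq expr2 mulrCA ler_wpM2l ?enorm_ge0 //.
exact: enorm_mulmx.
Qed.

Lemma qform_lower k (A P : 'M[R]_k) : P^T = P ->
  (forall v, v != 0 -> 0 < qform P v) ->
  (forall v, qform (A^T *m P + P *m A) v <= - qform 1%:M v) ->
  forall v, dot v v <= 4 * fro P * fro A ^+ 2 * qform P v.
Proof.
move=> PT Pp Ly v.
have P0 := qform_ge0 Pp.
have Mpos : forall v, 0 <= dot v (P *m v) by move=> w; rewrite -qformE.
have h1 : dot v v <= - 2 * dot v (P *m (A *m v)).
  by have := Ly v; rewrite qform_lyap // qform1; lra.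
have h2 := bf_CS v (A *m v) PT Mpos.
have h3 : dot (A *m v) (P *m (A *m v)) <= fro P * fro A ^+ 2 * dot v v.
  rewrite -qformE; apply: le_trans (qform_le _ _) _.
  rewrite -mulrA ler_wpM2l ?fro_ge0 // -!enorm_sq -exprMn ler_sqr ?nnegrE ?mulr_ge0 ?fro_ge0 ?enorm_ge0 //.
  exact: enorm_mulmx.
rewrite -!qformE in h2 h3 *.
have hv := dot_ge0 v.
have hq := P0 v.
have hqa := P0 (A *m v).
set N := dot v v in h1 h2 h3 hv *.
set b := dot v (P *m (A *m v)) in h1 h2.
set F := fro P * fro A ^+ 2 in h3.
have F0 : 0 <= F by rewrite /F mulr_ge0 ?fro_ge0 ?sqr_ge0.
have hN2 : N ^+ 2 <= 4 * (qform P v * (F * N)).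
  apply: (@le_trans _ _ (4 * b ^+ 2)).
    rewrite -[leRHS]/(4 * b ^+ 2) expr2; nra.
  rewrite ler_pM2l //; apply: le_trans h2 _.
  by rewrite ler_wpM2l.
have [N0|Npos] := eqVneq N 0.
  by rewrite N0 mulr_ge0 // mulr_ge0 // ?mulr_ge0 // ?fro_ge0 ?sqr_ge0.
have Ngt : 0 < N by rewrite lt_def Npos hv.
have : N * N <= N * (4 * F * qform P v).
  by rewrite -expr2; apply: le_trans hN2 _; rewrite le_eqVlt; apply/orP; left; apply/eqP; ring.
rewrite ler_pM2l // /F.
by rewrite !mulrA.
Qed.

End Gen.
Lemma real_ineq (R : realType) (al be c c' eps ell : R) :
  0 <= al -> 0 <= be -> 0 <= c -> c <= c' -> 0 < eps -> 0 < ell ->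
  0 < 2 * eps * c' * ell < 1 ->
  - al ^+ 2 + 2 * eps * c * al * be - (2 * c' / ell) * eps * (be ^+ 2 - ell * al * be)
  <= - ((1 - 2 * eps * c' * ell) / 2) * al ^+ 2
     - ((2 * eps * c' * ell) * (1 - 2 * eps * c' * ell)
        / ((1 + 2 * eps * c' * ell) * ell ^+ 2)) * be ^+ 2.
Proof.
move=> al0 be0 c0 cc e0 l0 /andP[r0 r1].
set r := 2 * eps * c' * ell in r0 r1 *.
have hb : be = ell * (be / ell) by field; rewrite gt_eqF.
set b := be / ell in hb.
have b0 : 0 <= b by rewrite /b divr_ge0 // ltW.
have step1 : - al ^+ 2 + 2 * eps * c * al * be - (2 * c' / ell) * eps * (be ^+ 2 - ell * al * be)
    = - al ^+ 2 + 2 * eps * c * ell * al * b - r * b ^+ 2 + r * al * b.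
  by rewrite hb /r; field; rewrite gt_eqF.
have step2 : 2 * eps * c * ell * al * b <= r * al * b.
  have h : 0 <= 2 * eps * ell * al * b * (c' - c).
    by rewrite !mulr_ge0 ?subr_ge0 ?invr_ge0 ?(ltW e0) ?(ltW l0).
  rewrite /r; lra.
have step3 : - ((1 - r) / 2) * al ^+ 2 - (r * (1 - r) / ((1 + r) * ell ^+ 2)) * be ^+ 2
   - (- al ^+ 2 + r * al * b - r * b ^+ 2 + r * al * b)
   = (1 + r) / 2 * (al - 2 * r * b / (1 + r)) ^+ 2.
  rewrite hb; field.
  by rewrite gt_eqF ?mulr_gt0 ?exprn_gt0 //; lra.
have step4 : 0 <= (1 + r) / 2 * (al - 2 * r * b / (1 + r)) ^+ 2.
  by rewrite mulr_ge0 ?sqr_ge0 // divr_ge0 //; lra.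
rewrite step1; lra.
Qed.

Section Helpers.
Variable R : realType.

Lemma der_addc m k (F : R -> 'M[R]_(m, k)) c t : derivable F t 1 ->
  derivable (fun s => F s + c) t 1 /\ 'D_1 (fun s => F s + c) t = 'D_1 F t.
Proof.
move=> dF.
have e : (fun s => F s + c) = F + cst c by apply/funext.
have dc : derivable (cst c) t 1 := derivable_cst c t 1.
rewrite e; split; first exact: derivableD.
by rewrite deriveD // derive_cst addr0.
Qed.

Lemma der_sub m k (F G : R -> 'M[R]_(m, k)) t : derivable F t 1 -> derivable G t 1 ->
  derivable (fun s => F s - G s) t 1 /\
  'D_1 (fun s => F s - G s) t = 'D_1 F t - 'D_1 G t.
Proof.
move=> dF dG.
have e : (fun s => F s - G s) = F - G by apply/funext.
rewrite e; split; first exact: derivableB.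
by rewrite deriveB.
Qed.

Lemma der_V (F G : R -> R) (k c : R) t : derivable F t 1 -> derivable G t 1 ->
  derivable (fun s => F s + k * (G s - c)) t 1 /\
  'D_1 (fun s => F s + k * (G s - c)) t = 'D_1 F t + k * 'D_1 G t.
Proof.
move=> dF dG.
have e : (fun s => F s + k * (G s - c)) = F + k *: (G - cst c) by apply/funext.
have dc : derivable (cst c) t 1 := derivable_cst c t 1.
have dGc : derivable (G - cst c) t 1 by exact: derivableB.
have dZ := @derivableZ _ _ _ _ k _ _ dGc.
rewrite e; split; first exact: (@derivableD _ _ _ _ _ _ _ dF dZ).
rewrite (@deriveD _ _ _ _ _ _ _ dF dZ) (@deriveZ _ _ _ _ k _ _ dGc).
by rewrite (@deriveB _ _ _ _ _ _ _ dG dc) derive_cst subr0.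
Qed.

End Helpers.


Lemma der_lin (R : realType) (F : R -> R) (k t : R) : derivable F t 1 ->
  derivable (fun s => F s + k * s) t 1 /\ 'D_1 (fun s => F s + k * s) t = 'D_1 F t + k.
Proof.
move=> dF.
have e : (fun s => F s + k * s) = F + k *: (fun s : R => s) by apply/funext.
have di : derivable (fun s : R => s) t 1 by exact: derivable_id.
have dZ := @derivableZ _ _ _ _ k _ _ di.
rewrite e; split; first exact: (@derivableD _ _ _ _ _ _ _ dF dZ).
rewrite (@deriveD _ _ _ _ _ _ _ dF dZ) (@deriveZ _ _ _ _ k _ _ di) derive_id.
by rewrite /GRing.scale /= mulr1.
Qed.

Section Main.
Variables (R : realType) (n p q : nat)
  (A : 'M[R]_n) (B : 'M[R]_(n, p)) (Q : 'M[R]_(n, q))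
  (Phi : 'cV[R]_(n + p) -> R) (w : 'cV[R]_q) (eps ell : R) (P : 'M[R]_n).
Hypothesis dPhi : forall z, differentiable Phi z.
Hypothesis eps0 : 0 < eps.
Hypothesis PT : P^T = P.
Hypothesis Pp : forall v, v != 0 -> 0 < qform P v.
Hypothesis Ly : forall v, qform (A^T *m P + P *m A) v <= - qform 1%:M v.
Hypothesis ell0 : 0 < ell.
Hypothesis Lip : forall x x' u, enorm (HtT A B *m (grad Phi (col_mx x u) - grad Phi (col_mx x' u)))
                   <= ell * enorm (x - x').
Hypothesis cpt : forall c : R, compact [set u : 'cV[R]_p | Phitil A B Q Phi w u <= c].
Hypothesis cvx : convex_fun Phi.
Hypothesis epsc : eps * (2 * ell * opnorm (P *m Hmat A B)) < 1.
Variables (x : R -> 'cV[R]_n) (u : R -> 'cV[R]_p).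
Hypothesis ode : forall t, 0 < t ->
       derivable x t 1 /\ derivable u t 1 /\
       x^`() t = A *m x t + B *m u t + Q *m w /\
       u^`() t = - (eps *: (HtT A B *m grad Phi (col_mx (x t) (u t)))).

Local Notation H := (Hmat A B).
Local Notation Rm := (Rmat A Q).
Local Notation L := (HtT A B).
Local Notation r0 := (Rmat A Q *m w).
Local Notation Pt := (Phitil A B Q Phi w).

Definition zz t := x t - (H *m u t + r0).
Definition yc t := col_mx (H *m u t + r0) (u t).
Definition ff t := L *m grad Phi (col_mx (x t) (u t)).
Definition gg t := L *m grad Phi (yc t).

Lemma AH : A *m H = - B.
Proof. by rewrite /Hmat mulmxN mulmxA mulmxV ?mul1mx // (A_unit PT Ly). Qed.

Lemma AR : A *m Rm = - Q.
Proof. by rewrite /Rmat mulmxN mulmxA mulmxV ?mul1mx // (A_unit PT Ly). Qed.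

Lemma Pt_cont : continuous Pt.
Proof.
move=> v.
have ca : continuous (fun v : 'cV[R]_p => col_mx (H *m v + r0) v).
  apply: cont_col; last by move=> y; exact: cvg_id.
  move=> y; apply: continuousD; first exact: cont_mulmx.
  exact: cst_continuous.
exact: (@continuous_comp _ _ _ (fun v : 'cV[R]_p => col_mx (H *m v + r0) v) Phi v
  (ca v) (differentiable_continuous (dPhi _))).
Qed.

Lemma fg_bound t : enorm (ff t - gg t) <= ell * enorm (zz t).
Proof. by rewrite /ff /gg /yc -mulmxBr; apply: Lip. Qed.

Lemma dot_L (gv : 'cV[R]_(n + p)) v : dot gv (col_mx H 1%:M *m v) = dot (L *m gv) v.
Proof. by rewrite dot_mulmx tr_col_mx trmx1. Qed.

Lemma der_z t : 0 < t -> derivable zz t 1 /\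
  'D_1 zz t = A *m zz t + eps *: (H *m ff t).
Proof.
move=> t0; have [dx [du [ex eu]]] := ode t0.
have [dHu eHu] := der_cmul H du.
have [d2 e2] := der_addc r0 dHu.
have [dz ez] := der_sub dx d2.
rewrite /zz; split => //.
rewrite ez e2 eHu -!derive1E ex eu.
rewrite mulmxN -scalemxAr /ff.
rewrite mulmxBr mulmxDr [A *m (H *m _)]mulmxA [A *m (Rm *m _)]mulmxA AH AR !mulNmx.
by apply/matrixP => i j; rewrite !mxE; ring.
Qed.

Lemma der_q t : 0 < t -> derivable (fun s => qform P (zz s)) t 1 /\
  'D_1 (fun s => qform P (zz s)) t =
   2 * dot (zz t) (P *m (A *m zz t)) + 2 * eps * dot (zz t) (P *m (H *m ff t)).
Proof.
move=> t0; have [dz ez] := der_z t0.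
have hq : (fun s => qform P (zz s)) = (fun s => ((zz s)^T *m (P *m zz s)) 0 0).
  by apply/funext => s; rewrite /qform mulmxA.
rewrite hq.
have [d1 e1] := der_tr dz.
have [d2 e2] := der_cmul P dz.
have [d3 e3] := der_mul d1 d2.
have [d4 e4] := der_entry 0 0 d3.
split => //.
rewrite e4 e3 e1 e2 ez mxE.
rewrite -!dot_trmx.
have sym : dot (A *m zz t + eps *: (H *m ff t)) (P *m zz t) =
    dot (zz t) (P *m (A *m zz t + eps *: (H *m ff t))).
  by rewrite dot_mulmx PT dotC.
rewrite sym mulmxDr dotDr -scalemxAr dotZr.
by rewrite -/(dot _ _); ring.
Qed.

Lemma der_Pt t : 0 < t -> derivable (fun s => Pt (u s)) t 1 /\
  'D_1 (fun s => Pt (u s)) t = - eps * dot (gg t) (ff t).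
Proof.
move=> t0; have [dx [du [ex eu]]] := ode t0.
have [dHu eHu] := der_cmul H du.
have [d2 e2] := der_addc r0 dHu.
have [dy ey] := der_col d2 du.
have [dc ec] := der_chain dy (dPhi _).
split; first exact: dc.
rewrite ec ey e2 eHu diff_grad //.
have -> : col_mx (H *m 'D_1 u t) ('D_1 u t) = col_mx H 1%:M *m 'D_1 u t.
  by rewrite mul_col_mx mul1mx.
rewrite dot_L -derive1E eu dotNr dotZr.
by rewrite /gg /ff /yc mulNr.
Qed.


Lemma V_der (c' Pmin : R) t : 0 < t -> opnorm (P *m H) <= c' ->
  0 < 2 * eps * c' * ell < 1 ->
  derivable (fun s => qform P (zz s) + (2 * c' / ell) * (Pt (u s) - Pmin)) t 1 /\
  'D_1 (fun s => qform P (zz s) + (2 * c' / ell) * (Pt (u s) - Pmin)) t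
  <= - ((1 - 2 * eps * c' * ell) / 2) * enorm (zz t) ^+ 2
     - ((2 * eps * c' * ell) * (1 - 2 * eps * c' * ell)
        / ((1 + 2 * eps * c' * ell) * ell ^+ 2)) * enorm (ff t) ^+ 2.
Proof.
move=> t0 hc hr.
have [dq eq] := der_q t0.
have [dP eP] := der_Pt t0.
have [dV eV] := der_V (2 * c' / ell) Pmin dq dP.
split => //.
rewrite eV eq eP.
set c := opnorm (P *m H).
set al := enorm (zz t); set be := enorm (ff t).
have c0 : 0 <= c by exact: opnorm_ge0.
have c'0 : 0 <= c' by apply: le_trans hc.
have kap0 : 0 <= 2 * c' / ell by rewrite divr_ge0 // ?mulr_ge0 // ltW.
have h1 : 2 * dot (zz t) (P *m (A *m zz t)) <= - al ^+ 2.
  by rewrite -qform_lyap // /al enorm_sq -qform1; apply: Ly.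
have h2 : dot (zz t) (P *m (H *m ff t)) <= al * (c * be).
  rewrite mulmxA; apply: le_trans (dot_le' _ _) _.
  by rewrite ler_wpM2l ?enorm_ge0 // enorm_mulmx_op.
have h3 : be ^+ 2 - ell * al * be <= dot (gg t) (ff t).
  have e1 : dot (gg t) (ff t) = dot (ff t) (ff t) - dot (ff t - gg t) (ff t).
    by rewrite dotBl; ring.
  have hb2 : be ^+ 2 = dot (ff t) (ff t) by rewrite /be enorm_sq.
  rewrite e1 hb2.
  have : dot (ff t - gg t) (ff t) <= ell * al * be.
    apply: le_trans (dot_le' _ _) _.
    by rewrite ler_wpM2r ?enorm_ge0 // fg_bound.
  lra.
have h4 : (2 * c' / ell) * eps * (be ^+ 2 - ell * al * be)
          <= (2 * c' / ell) * eps * dot (gg t) (ff t).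
  by rewrite ler_wpM2l // mulr_ge0 // ltW.
have h5 : 2 * eps * dot (zz t) (P *m (H *m ff t)) <= 2 * eps * (al * (c * be)).
  by rewrite ler_wpM2l // mulr_ge0 // ltW.
have := real_ineq (enorm_ge0 (zz t)) (enorm_ge0 (ff t)) c0 hc eps0 ell0 hr.
rewrite -/al -/be.
move: h1 h4 h5; lra.
Qed.

Lemma approx (Pmin : R) : (forall v, Pmin <= Pt v) -> forall ep, 0 < ep ->
  exists2 et, 0 < et & forall v, Pt v <= Pmin + et ->
    exists2 v0, Pt v0 = Pmin & enorm (v - v0) < ep.
Proof.
move=> gmin ep ep0.
set ep' := ep / (p%:R + 1).
have p1 : 0 < (p%:R : R) + 1 by rewrite ltr_wpDl ?ler0n.
have ep'0 : 0 < ep' by rewrite divr_gt0.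
set U := \bigcup_(v0 in [set v0 | Pt v0 = Pmin]) ball v0 ep'.
have oU : open U by apply: bigcup_open => i _; exact: ball_open.
set Bad := [set v | Pt v <= Pmin + 1] `&` ~` U.
have cB : compact Bad by apply: compact_closedI; [exact: cpt | exact: open_closedC].
have key : forall v v0 : 'cV[R]_p, ball v0 ep' v -> enorm (v - v0) < ep.
  move=> v v0; rewrite -ball_normE /= => hb.
  apply: le_lt_trans (enorm_le_norm _) _.
  rewrite distrC in hb.
  have : (p%:R : R) * `|v - v0| <= p%:R * ep' by rewrite ler_wpM2l ?ler0n // ltW.
  have : (p%:R : R) * ep' < ep.
    rewrite /ep' mulrA ltr_pdivrMr // mulrDr mulr1 mulrC ltrDl //.
  lra.
have [ne|empty] := pselect (Bad !=set0).
  have [ub ubB ubmin] := compact_EVT_min ne cB (continuous_subspaceT Pt_cont).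
  move: (ubB); rewrite inE => -[ub1 ubU].
  have gap : Pmin < Pt ub.
    rewrite lt_def (gmin ub) andbT; apply/eqP => eub.
    by apply: ubU; exists ub; [rewrite /= eub | exact: ballxx].
  exists (Num.min 1 (Pt ub - Pmin) / 2).
    by rewrite divr_gt0 // lt_min ltr01 subr_gt0.
  move=> v hv.
  have [[v0 hv0 hb]|nU] := pselect (U v).
    by exists v0 => //; exact: key.
  exfalso.
  have m1 : Num.min 1 (Pt ub - Pmin) <= 1 by rewrite ge_min lexx.
  have m2 : Num.min 1 (Pt ub - Pmin) <= Pt ub - Pmin by rewrite ge_min lexx orbT.
  have m0 : 0 < Num.min 1 (Pt ub - Pmin) by rewrite lt_min ltr01 subr_gt0.
  have vB : v \in Bad by rewrite inE; split => //=; lra.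
  have := ubmin v vB.
  lra.
exists 1 => // v hv.
have [[v0 hv0 hb]|nU] := pselect (U v).
  by exists v0 => //; exact: key.
by exfalso; apply: empty; exists v; split.
Qed.

Theorem conv e : 0 < e ->
  \forall t \near +oo, exists2 s, solution_set A B Q Phi w s &
    enorm (col_mx (x t) (u t) - col_mx s.1 s.2) < e.
Proof.
move=> e0.
set c := opnorm (P *m H).
have c0 : 0 <= c by exact: opnorm_ge0.
have el0 : 0 < eps * ell by rewrite mulr_gt0.
set K := 1 / (2 * (eps * ell)).
have K0 : 0 < K by rewrite divr_gt0 // mulr_gt0.
have hK : eps * ell * K = 1 / 2 by rewrite /K; field; rewrite !gt_eqF.
set c' := (c + K) / 2.
have hc : eps * ell * c < 1 / 2 by move: epsc; rewrite -/c; lra.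
have cK : c <= K.
  have : eps * ell * c <= eps * ell * K by lra.
  by rewrite ler_pM2l.
have cc' : c <= c' by rewrite /c'; lra.
have c'0 : 0 < c' by rewrite /c'; lra.
have hr' : 2 * eps * c' * ell = eps * ell * c + 1 / 2.
  by rewrite /c' -hK; field.
have hr : 0 < 2 * eps * c' * ell < 1.
  rewrite hr'; apply/andP; split; last lra.
  have : 0 <= eps * ell * c by rewrite mulr_ge0 // ltW.
  lra.
set r := 2 * eps * c' * ell in hr hr'.
set kap := 2 * c' / ell.
have kap0 : 0 < kap by rewrite /kap divr_gt0 // mulr_gt0.
set d1 := (1 - r) / 2.
set d2 := r * (1 - r) / ((1 + r) * ell ^+ 2).
have d10 : 0 < d1 by rewrite /d1; move: hr => /andP[? ?]; lra.
have d20 : 0 < d2.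
  move: hr => /andP[ra rb].
  by rewrite /d2 divr_gt0 ?mulr_gt0 ?exprn_gt0 //; lra.
have cK0 := @cpt (Pt (u 1)).
have ne : [set v | Pt v <= Pt (u 1)] !=set0 by exists (u 1) => /=.
have [us usK usmin] := compact_EVT_min ne cK0 (continuous_subspaceT Pt_cont).
set Pmin := Pt us.
have gmin : forall v, Pmin <= Pt v.
  move=> v; have [h|h] := lerP (Pt v) (Pt (u 1)).
    by apply: usmin; rewrite inE.
  move: usK; rewrite inE /= => h'; rewrite /Pmin; lra.
set V := fun s => qform P (zz s) + kap * (Pt (u s) - Pmin).
have qP0 := qform_ge0 Pp.
have V0 : forall s, 0 <= V s.
  move=> s; rewrite /V; apply: addr_ge0 => //.
  by rewrite mulr_ge0 ?subr_ge0 // ltW.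
have Vd : forall t, 0 < t -> derivable V t 1 /\
    'D_1 V t <= - d1 * enorm (zz t) ^+ 2 - d2 * enorm (ff t) ^+ 2.
  by move=> t t0; exact: (V_der Pmin t0 cc' hr).
have Vmono : forall s t, 0 < s -> s <= t -> V t <= V s.
  move=> s t s0 st; apply: nonincr => //.
    move=> y /andP[y1 y2]; exact: (Vd y (lt_le_trans s0 y1)).1.
  move=> y /andP[y1 y2]; have y0 : 0 < y by apply: lt_trans y1.
  rewrite derive1E; apply: le_trans (Vd y y0).2 _.
  have := d10; have := d20; have := sqr_ge0 (enorm (zz y)); have := sqr_ge0 (enorm (ff y)).
  nra.

have bK1 := compact_bounded (@cpt (Pmin + V 1 / kap)).
have [M0 M00 hM0] := pinfty_ex_gt0 bK1.
set D := 2 * (p%:R * M0).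
have D0 : 0 <= D by rewrite /D mulr_ge0 // mulr_ge0 ?ler0n // ltW.
have V1t : forall t, 1 <= t -> V t <= V 1.
  by move=> t t1; apply: Vmono.
have uK1 : forall t, 1 <= t -> Pt (u t) <= Pmin + V 1 / kap.
  move=> t t1.
  have h1 : kap * (Pt (u t) - Pmin) <= V 1.
    by apply: le_trans (V1t t t1); rewrite /V lerDr.
  have h2 : (kap * (Pt (u t) - Pmin)) / kap <= V 1 / kap.
    by rewrite ler_pM2r // invr_gt0.
  have e2 : (kap * (Pt (u t) - Pmin)) / kap = Pt (u t) - Pmin.
    by field; rewrite gt_eqF.
  move: h2; rewrite e2; lra.
have usK1 : Pt us <= Pmin + V 1 / kap.
  by rewrite /Pmin lerDl divr_ge0 // ltW.
have nb : forall v, Pt v <= Pmin + V 1 / kap -> enorm v <= p%:R * M0.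
  move=> v hv; apply: le_trans (enorm_le_norm _) _.
  by rewrite ler_wpM2l ?ler0n //; apply: hM0.
have Dbound : forall t, 1 <= t -> enorm (u t - us) <= D.
  move=> t t1; apply: le_trans (enormD _ _) _; rewrite enormN.
  have := nb _ (uK1 t t1); have := nb _ usK1; rewrite /D; lra.
have gb : forall t, enorm (gg t) <= enorm (ff t) + ell * enorm (zz t).
  move=> t.
  have -> : gg t = ff t + - (ff t - gg t) by rewrite opprB addrC subrK.
  apply: le_trans (enormD _ _) _; rewrite enormN.
  by rewrite lerD2l fg_bound.
have cvb : forall t, 1 <= t ->
    Pt (u t) - Pmin <= (enorm (ff t) + ell * enorm (zz t)) * D.
  move=> t t1.
  have hcv := cvx_grad (col_mx (H *m us + r0) us) (dPhi (yc t)) cvx.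
  have ed : col_mx (H *m us + r0) us - yc t = col_mx H 1%:M *m (us - u t).
    rewrite /yc mul_col_mx mul1mx opp_col_mx add_col_mx mulmxBr.
    by congr col_mx; apply/matrixP => i j; rewrite !mxE; ring.
  rewrite ed dot_L -/(gg t) in hcv.
  have hd := dot_le (gg t) (us - u t).
  have en : enorm (us - u t) = enorm (u t - us) by rewrite -enormN opprB.
  rewrite en in hd.
  have hn := ler_norm (- dot (gg t) (us - u t)); rewrite normrN in hn.
  have h3 : enorm (gg t) * enorm (u t - us) <= (enorm (ff t) + ell * enorm (zz t)) * D.
    by apply: ler_pM; rewrite ?enorm_ge0 ?gb ?Dbound.
  have e1 : Pt (u t) = Phi (yc t) by [].
  have e2 : Pt us = Phi (col_mx (H *m us + r0) us) by [].
  rewrite /Pmin e1 e2; move: hcv hd hn h3.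
  set a1 := Phi (yc t); set a2 := Phi _; set a3 := dot _ _; set a4 := enorm _ * _.
  lra.

have Vup : forall t, 1 <= t ->
    V t <= fro P * enorm (zz t) ^+ 2 + kap * ((enorm (ff t) + ell * enorm (zz t)) * D).
  move=> t t1; rewrite /V enorm_sq; apply: lerD; first exact: qform_le.
  by rewrite ler_wpM2l ?cvb // ltW.
have small : forall et, 0 < et -> exists2 T, 1 <= T & V T < et.
  move=> et et0.
  have [//|nT] := pselect (exists2 T, 1 <= T & V T < et).
  exfalso.
  have allT : forall T, 1 <= T -> et <= V T.
    by move=> T T1; rewrite leNgt; apply/negP => hlt; apply: nT; exists T.
  set S := fro P + kap * D * (1 + ell).
  have S0 : 0 <= S.
    have h1 := fro_ge0 P.
    have h0 : 0 <= 1 + ell by rewrite addr_ge0 // ltW.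
    have h2 : 0 <= kap * D * (1 + ell).
      by apply: mulr_ge0 => //; apply: mulr_ge0 => //; exact: ltW.
    rewrite /S; lra.
  set rho := Num.min 1 (et / (2 * (S + 1))).
  have rho0 : 0 < rho by rewrite lt_min ltr01 divr_gt0 // mulr_gt0 //; lra.
  have rho1 : rho <= 1 by rewrite ge_min lexx.
  have rho2 : rho <= et / (2 * (S + 1)) by rewrite ge_min lexx orbT.
  have Sr : S * rho < et.
    have h1 : S * rho <= S * (et / (2 * (S + 1))) by rewrite ler_wpM2l.
    have h2 : S * (et / (2 * (S + 1))) < et.
      have -> : S * (et / (2 * (S + 1))) = et * (S / (2 * (S + 1))).
        by field; rewrite gt_eqF //; lra.
      rewrite gtr_pMr // ltr_pdivrMr; last by rewrite mulr_gt0 //; lra.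
      lra.
    lra.
  have big : forall t, 1 <= t -> rho ^+ 2 <= enorm (zz t) ^+ 2 + enorm (ff t) ^+ 2.
    move=> t t1; rewrite leNgt; apply/negP => hlt.
    have a0 := enorm_ge0 (zz t); have b0 := enorm_ge0 (ff t).
    set al := enorm (zz t) in hlt a0 *; set be := enorm (ff t) in hlt b0 *.
    have ar : al <= rho by nra.
    have br : be <= rho by nra.
    have a2 : al ^+ 2 <= rho by nra.
    have h1 := Vup t t1; rewrite -/al -/be in h1.
    have h2 : fro P * al ^+ 2 <= fro P * rho by rewrite ler_wpM2l ?fro_ge0.
    have h3 : kap * ((be + ell * al) * D) <= kap * ((rho + ell * rho) * D).
      have hh : be + ell * al <= rho + ell * rho.
        by apply: lerD => //; apply: ler_wpM2l => //; exact: ltW.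
      apply: ler_wpM2l; first exact: ltW.
      exact: ler_wpM2r.
    have h4 : S * rho = fro P * rho + kap * ((rho + ell * rho) * D) by rewrite /S; ring.
    have := allT t t1.
    lra.
  set dm := Num.min d1 d2.
  have dm0 : 0 < dm by rewrite lt_min d10 d20.
  have dm1 : dm <= d1 by rewrite ge_min lexx.
  have dm2 : dm <= d2 by rewrite ge_min lexx orbT.
  have Vd2 : forall t, 1 <= t -> 'D_1 V t <= - (dm * rho ^+ 2).
    move=> t t1; have t0 : 0 < t by lra.
    apply: le_trans (Vd t t0).2 _.
    have hb := big t t1.
    have z2 := sqr_ge0 (enorm (zz t)); have f2 := sqr_ge0 (enorm (ff t)).
    have i1 : dm * enorm (zz t) ^+ 2 <= d1 * enorm (zz t) ^+ 2 by rewrite ler_wpM2r.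
    have i2 : dm * enorm (ff t) ^+ 2 <= d2 * enorm (ff t) ^+ 2 by rewrite ler_wpM2r.
    have i3 : dm * rho ^+ 2 <= dm * (enorm (zz t) ^+ 2 + enorm (ff t) ^+ 2).
      by rewrite ler_wpM2l // ltW.
    lra.
  set k := dm * rho ^+ 2.
  have k0 : 0 < k by rewrite /k mulr_gt0 // exprn_gt0.
  set T := 2 + V 1 / k.
  have T1 : 1 <= T by rewrite /T; have := divr_ge0 (V0 1) (ltW k0); lra.
  have hW : V T + k * T <= V 1 + k * 1.
    apply: (@nonincr R (fun s => V s + k * s) 1 T T1).
      move=> y /andP[y1 y2]; have y0 : 0 < y by lra.
      exact: (der_lin k (Vd y y0).1).1.
    move=> y /andP[y1 y2]; have y0 : 0 < y by lra.
    rewrite derive1E (der_lin k (Vd y y0).1).2.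
    have := Vd2 y (ltW y1); rewrite -/k; lra.
  have eT : k * T = 2 * k + V 1 by rewrite /T; field; rewrite gt_eqF.
  have := V0 T; lra.
set eH := fro H + 1.
have eH0 : 0 < eH by rewrite /eH ltr_wpDl ?fro_ge0.
have ep0 : 0 < e / (2 * eH) by rewrite divr_gt0 // mulr_gt0.
have [et1 et10 happ] := approx gmin ep0.
set Kz := 4 * fro P * fro A ^+ 2.
have Kz0 : 0 <= Kz by rewrite /Kz !mulr_ge0 ?fro_ge0 ?sqr_ge0.
set et := Num.min (kap * et1) ((e / 2) ^+ 2 / (Kz + 1)).
have et0 : 0 < et.
  rewrite lt_min mulr_gt0 //= divr_gt0 ?exprn_gt0 ?divr_gt0 //; lra.
have [T T1 VT] := small et et0.
near=> t.
have tT : T <= t by near: t; apply: nbhs_pinfty_ge; rewrite num_real.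
have t1 : 1 <= t by apply: le_trans tT.
have Vt : V t < et by apply: le_lt_trans (Vmono T t _ tT) VT; lra.
have Vt1 : V t < kap * et1 by apply: lt_le_trans Vt _; rewrite ge_min lexx.
have Vt2 : V t < (e / 2) ^+ 2 / (Kz + 1) by apply: lt_le_trans Vt _; rewrite ge_min lexx orbT.
have hP : Pt (u t) <= Pmin + et1.
  have h1 : kap * (Pt (u t) - Pmin) < kap * et1.
    by apply: le_lt_trans Vt1; rewrite /V lerDr.
  rewrite ltr_pM2l // in h1; lra.
have [u0 hu0 du0] := happ (u t) hP.
have hz : enorm (zz t) < e / 2.
  have h1 := qform_lower PT Pp Ly (zz t); rewrite -/Kz -enorm_sq in h1.
  have h2 : qform P (zz t) <= V t.
    by rewrite /V lerDl mulr_ge0 ?subr_ge0 // ltW.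
  have h3 : Kz * qform P (zz t) <= Kz * V t by rewrite ler_wpM2l.
  have h4 : (Kz + 1) * V t < (Kz + 1) * ((e / 2) ^+ 2 / (Kz + 1)).
    by rewrite ltr_pM2l //; lra.
  have e4 : (Kz + 1) * ((e / 2) ^+ 2 / (Kz + 1)) = (e / 2) ^+ 2.
    by field; rewrite gt_eqF //; lra.
  rewrite e4 in h4.
  have := V0 t; have := enorm_ge0 (zz t); have : 0 < e / 2 by lra.
  nra.
exists (H *m u0 + r0, u0).
  split => //= x' u' ->.
  change (Pt u0 <= Pt u'); rewrite hu0; exact: gmin.
have ed : col_mx (x t) (u t) - col_mx (H *m u0 + r0, u0).1 (H *m u0 + r0, u0).2 =
    col_mx (zz t + H *m (u t - u0)) (u t - u0).
  rewrite /= opp_col_mx add_col_mx /zz mulmxBr.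
  by congr col_mx; apply/matrixP => i j; rewrite !mxE; ring.
rewrite ed; apply: le_lt_trans (enorm_col_mx _ _) _.
have h1 : enorm (zz t + H *m (u t - u0)) <= enorm (zz t) + fro H * enorm (u t - u0).
  by apply: le_trans (enormD _ _) _; rewrite lerD2l enorm_mulmx.
have h2 : eH * enorm (u t - u0) < eH * (e / (2 * eH)) by rewrite ltr_pM2l.
have e2 : eH * (e / (2 * eH)) = e / 2 by field; rewrite gt_eqF.
rewrite e2 /eH in h2.
lra.
Unshelve. all: by end_near.
Qed.
End Main.

Unset Implicit Arguments.

Theorem corollary1 (R : realType) (n p q : nat)
  (A : 'M[R]_n) (B : 'M[R]_(n, p)) (Q : 'M[R]_(n, q))
  (Phi : 'cV[R]_(n + p) -> R) (w : 'cV[R]_q) (eps ell : R) (P : 'M[R]_n) :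
  (forall z, differentiable Phi z) ->
  0 < eps ->
  (* (i) *)
  P^T = P -> (forall v, v != 0 -> 0 < qform P v) ->
  (forall v, qform (A^T *m P + P *m A) v <= - qform 1%:M v) ->
  (* (ii) *)
  (forall w' u, differentiable (Phitil A B Q Phi w') u) ->
  (* (iii) *)
  0 < ell ->
  (forall x x' u, enorm (HtT A B *m (grad Phi (col_mx x u) - grad Phi (col_mx x' u)))
                   <= ell * enorm (x - x')) ->
  (* (iv) *)
  (forall c : R, compact [set u : 'cV[R]_p | Phitil A B Q Phi w u <= c]) ->
  (* (v) *)
  convex_fun Phi ->
  (* eps < 1 / (2 ell ||P H||), read with 1/0 = +infinity *)
  eps * (2 * ell * opnorm (P *m Hmat A B)) < 1 ->
  forall (x : R -> 'cV[R]_n) (u : R -> 'cV[R]_p),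
    (forall t, 0 < t ->
       derivable x t 1 /\ derivable u t 1 /\
       x^`() t = A *m x t + B *m u t + Q *m w /\
       u^`() t = - (eps *: (HtT A B *m grad Phi (col_mx (x t) (u t))))) ->
    forall e : R, 0 < e ->
      \forall t \near +oo, exists2 s, solution_set A B Q Phi w s &
        enorm (col_mx (x t) (u t) - col_mx s.1 s.2) < e.
Proof.
move=> dPhi eps0 PT Pp Ly _ ell0 Lip cpt cvx epsc x u ode e e0.
exact: (conv dPhi eps0 PT Pp Ly ell0 Lip cpt cvx epsc ode e0).
Qed.
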